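(* Let $0\le q\le N$, $n\ge 1$, let $\alpha\in E_0^q$ with $d^q_0\alpha=0$, and let $\tilde\alpha$ be an $(n-1)$-th order extension of $\alpha$. Let $i$ be an integer with $0<i\le n$. Then there exists an $n$-th order extension $\hat\alpha$ of $\alpha$ with $\hat\alpha-\tilde\alpha\in t^i\mathcal{E}_0^q$ if and only if $o^q_{n,n-i}([\tilde\alpha \bmod t^n])=0$ in $H^{q+1}(\mathcal{E}_0^\bullet\otimes_{\mathcal{O}}\mathcal{O}/\mathfrak{m}_0^{n-i+1})$.
   Context: Setting. Let $B$ be a one-dimensional complex manifold (a disc) with holomorphic coordinate $t$ centred at a point $0\in B$; write $\mathcal{O}=\mathcal{O}_{B,0}$ and $\mathfrak{m}_0=t\mathcal{O}$ for its maximal ideal. Let $(E^\bullet,d^\bullet)$: $0\to E^0\xrightarrow{d^0}E^1\xrightarrow{d^1}\cdots\xrightarrow{d^{N-1}}E^N\to 0$ be a bounded complex of holomorphic vector bundles on $B$ whose differentials are $\mathcal{O}_B$-linear holomorphic bundle maps with $d^{q+1}\circ d^q=0$. For $s\in B$, $E_s^\bullet$ denotes the fibre complex (with differentials $d^q_s$) and $H^q(E_s)=\ker d^q_s/\mathrm{im}\, d^{q-1}_s$. Let $\mathcal{E}_0^q$ be the stalk at $0$ of the sheaf of holomorphic sections of $E^q$; for a germ $s$, $s(0)$ is its value at $0$. For $n\ge1$, $\mathcal{E}_0^\bullet\otimes_{\mathcal{O}}\mathcal{O}/\mathfrak{m}_0^n$ is the induced truncated complex with cohomology $H^q(\mathcal{E}_0^\bullet\otimes_{\mathcal{O}}\mathcal{O}/\mathfrak{m}_0^n)$.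 Extensions. For $\alpha\in\ker d^q_0$ and $k\ge0$, a $k$-th order extension of $\alpha$ is a germ $\tilde\alpha\in\mathcal{E}_0^q$ with $\tilde\alpha(0)=\alpha$ and $d^q\tilde\alpha\in t^{k+1}\mathcal{E}_0^{q+1}$ (i.e. the $k$-jet of $d^q\tilde\alpha$ at $0$ vanishes); its reduction mod $t^{k+1}$ defines a class $[\tilde\alpha \bmod t^{k+1}]\in H^q(\mathcal{E}_0^\bullet\otimes\mathcal{O}/\mathfrak{m}_0^{k+1})$. Obstruction maps. $o_n^q:H^q(\mathcal{E}_0^\bullet\otimes\mathcal{O}/\mathfrak{m}_0^n)\to H^{q+1}(E_0)$ sends the class of $\tilde\alpha \bmod t^n$ (where $\tilde\alpha\in\mathcal{E}_0^q$ with $d^q\tilde\alpha\in t^n\mathcal{E}_0^{q+1}$) to the class of $(t^{-n}d^q\tilde\alpha)(0)$ (this is well defined). For $i\ge 0$, $\rho_i^q:H^q(E_0)\to H^q(\mathcal{E}_0^\bullet\otimes\mathcal{O}/\mathfrak{m}_0^{i+1})$ is $[\sigma]\mapsto[t^i\tilde\sigma \bmod t^{i+1}]$, where $\tilde\sigma$ is any germ with $\tilde\sigma(0)=\sigma$. For $0\le i\le n$ set $o^q_{n,i}=\rho_i^{q+1}\circ o_n^q: H^q(\mathcal{E}_0^\bullet\otimes\mathcal{O}/\mathfrak{m}_0^n)\to H^{q+1}(\mathcal{E}_0^\bullet\otimes\mathcal{O}/\mathfrak{m}_0^{i+1})$. *)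

(* Defs.v *)
(* Stalk-level (algebraic) model of the setting:
   O = stalk ring (abstracted as an integral domain), t = the coordinate
   (a nonzero element), E^q_0 = O^(r q) (row vectors; stalk of a rank r q
   holomorphic vector bundle after trivialisation), d^q = an O-matrix acting
   on row vectors, v |-> v *m d^q. *)
From HB Require Import structures.
From mathcomp Require Import all_boot all_order all_algebra.
Set Implicit Arguments. Unset Strict Implicit. Unset Printing Implicit Defensive.
Import GRing.Theory.
Local Open Scope ring_scope.

(* v \in t^k E  (the k-jet of v at 0 vanishes) *)
Definition tdiv (O : comRingType) (t : O) (k : nat) (m : nat) (v : 'rV[O]_m) : Prop :=
  exists w : 'rV[O]_m, v = t ^+ k *: w.

(* alpha (a germ representing a point alpha(0) of the fibre E_0^q) satisfies
   d^q_0 (alpha(0)) = 0, i.e. d^q alpha vanishes at 0 *)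
Definition fibre_cocycle (O : comRingType) (t : O) (m p : nat)
  (dq : 'M[O]_(m, p)) (alpha : 'rV[O]_m) : Prop :=
  tdiv t 1 (alpha *m dq).

(* atil is a k-th order extension of (the fibre value alpha(0) of) alpha:
   atil(0) = alpha(0) and d^q atil \in t^(k+1) E^(q+1) *)
Definition is_extension (O : comRingType) (t : O) (m p : nat)
  (dq : 'M[O]_(m, p)) (alpha : 'rV[O]_m) (k : nat) (atil : 'rV[O]_m) : Prop :=
  tdiv t 1 (atil - alpha) /\ tdiv t k.+1 (atil *m dq).

(* The class of the cocycle v in H^(q+1)(E_0 (x) O/m^l) is zero:
   v = d^q x  mod t^l  for some x in E^q. *)
Definition cohom_zero (O : comRingType) (t : O) (m p : nat)
  (dq : 'M[O]_(m, p)) (l : nat) (v : 'rV[O]_p) : Prop :=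
  exists x : 'rV[O]_m, tdiv t l (v - x *m dq).

(* o^q_{n,j}([atil mod t^n]) = 0 in H^(q+1)(E_0 (x) O/m^(j+1)):
   o_n^q([atil mod t^n]) is the class of gamma(0) where d^q atil = t^n gamma;
   rho_j^(q+1) sends it (using the lift gamma of gamma(0)) to the class of
   t^j gamma mod t^(j+1). *)
Definition obstr_vanishes (O : comRingType) (t : O) (m p : nat)
  (dq : 'M[O]_(m, p)) (n j : nat) (atil : 'rV[O]_m) : Prop :=
  exists gamma : 'rV[O]_p,
    atil *m dq = t ^+ n *: gamma /\ cohom_zero t dq j.+1 (t ^+ j *: gamma).

(* Main.v *)
Require Import Defs.
From HB Require Import structures.
From mathcomp Require Import all_boot all_order all_algebra.
Import GRing.Theory.
Local Open Scope ring_scope.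

Lemma scale_cancel (O : idomainType) (t : O) (ht : t != 0) (k m : nat)
  (a b : 'rV[O]_m) : t ^+ k *: a = t ^+ k *: b -> a = b.
Proof.
move=> H; apply/rowP => j.
have := congr1 (fun v : 'rV[O]_m => v 0 j) H; rewrite /= !mxE.
by apply: mulfI; rewrite expf_neq0.
Qed.

Theorem proposition2p3 (O : idomainType) (t : O) (ht : t != 0)
  (N : nat) (r : nat -> nat) (d : forall q : nat, 'M[O]_(r q, r q.+1))
  (hbound : forall q : nat, (N < q)%N -> r q = 0%N)
  (hcomplex : forall q : nat, d q *m d q.+1 = 0)
  (q n : nat) (hq : (q <= N)%N) (hn : (1 <= n)%N)
  (alpha : 'rV[O]_(r q)) (halpha : fibre_cocycle t (d q) alpha)
  (atil : 'rV[O]_(r q)) (hatil : is_extension t (d q) alpha n.-1 atil)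
  (i : nat) (hi : (0 < i <= n)%N) :
  (exists ahat : 'rV[O]_(r q),
      is_extension t (d q) alpha n ahat /\ tdiv t i (ahat - atil))
  <-> obstr_vanishes t (d q) n (n - i) atil.
Proof.
case/andP: hi => hi0 hin.
have hn1 : n.-1.+1 = n by rewrite prednK.
case: hatil => [[u hu] [g hg]]; rewrite hn1 in hg.
have hsplit : n = (i + (n - i))%N by rewrite subnKC.
split.
  move=> [ahat [ext [x hx]]].
  case: ext => [[u2 hu2] [w hw]].
  exists g; split; first exact: hg.
  exists (- x); rewrite mulNmx opprK.

  exists w; apply: (@scale_cancel _ t ht i); rewrite scalerDr.
  have hah : ahat = atil + t ^+ i *: x by rewrite -hx addrC subrK.
  rewrite hah mulmxDl hg -scalemxAl in hw.
  rewrite scalerA -exprD -hsplit.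
  have -> : t ^+ n *: g = t ^+ n.+1 *: w - t ^+ i *: (x *m d q)
    by rewrite -hw addrK.
  rewrite subrK scalerA -exprD.
  by rewrite addnS -hsplit.
move=> [g' [hg' [x [w hw]]]].
  exists (atil - t ^+ i *: x); split; last first.
    by exists (- x); rewrite addrC addKr scalerN.
  split.
    exists (u - t ^+ i.-1 *: x).
    rewrite addrAC hu scalerDr scalerN scalerA -exprD add1n prednK //.
  exists w.
  rewrite mulmxBl hg' -scalemxAl.
  have -> : x *m d q = t ^+ (n - i) *: g' - t ^+ (n - i).+1 *: w
    by rewrite -hw opprB addrC subrK.
  rewrite scalerBr !scalerA -!exprD -hsplit opprB addrC subrK.
  by rewrite addnS -hsplit.
Qed.
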